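(* Let $M$ be a finitary matroid on $E$, $B$ a base of $M$, $n\ge 0$ an integer, $e_0,\dots,e_n\in E\setminus B$ pairwise distinct, and $F\subseteq B$ with $|F|\le n$. Then there exist $i^*\le n$ and a circuit $C$ of $M$ with \[e_{i^*}\in C\subseteq\bigcup_{i^*\le i\le n}C_M(e_i,B)\setminus F.\]
   Context: $C_M(e,B)$ denotes the fundamental circuit of $e\notin B$ on the base $B$, i.e. the unique circuit of $M$ contained in $B\cup\{e\}$. *)

(* Defs.v *)
From mathcomp Require Import all_boot.
From mathcomp Require Import classical_sets.
Set Implicit Arguments. Unset Strict Implicit. Unset Printing Implicit Defensive.
Local Open Scope classical_set_scope.

(* Finite subsets are represented by duplicate-free lists. *)
Definition sset (T : eqType) (s : seq T) : set T := [set x | x \in s].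

Definition finitary_matroid (T : eqType) (E : set T) (indep : set T -> Prop) : Prop :=
  [/\ (forall I, indep I -> I `<=` E),
      indep set0,
      (forall I J, indep J -> I `<=` J -> indep I),
      (forall s t : seq T, uniq s -> uniq t ->
          indep (sset s) -> indep (sset t) -> size s < size t ->
          exists2 x, x \in t & x \notin s /\ indep (x |` sset s)) &
      (forall X, (forall s : seq T, sset s `<=` X -> indep (sset s)) -> indep X)].

Definition is_base (T : eqType) (indep : set T -> Prop) (B : set T) : Prop :=
  indep B /\ (forall X, indep X -> B `<=` X -> X = B).

Definition is_circuit (T : eqType) (E : set T) (indep : set T -> Prop) (C : set T) : Prop :=
  [/\ C `<=` E, ~ indep C & (forall D, D `<=` C -> D <> C -> indep D)].

(* C is the fundamental circuit C_M(e,B): a circuit contained in B ∪ {e}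
   (which is unique when B is a base and e ∉ B). *)
Definition is_fund_circuit (T : eqType) (E : set T) (indep : set T -> Prop)
  (B : set T) (e : T) (C : set T) : Prop :=
  is_circuit E indep C /\ C `<=` e |` B.

(* Main.v *)
Require Import Defs.
From mathcomp Require Import all_boot.
From mathcomp Require Import classical_sets boolp.
From Stdlib Require Import Classical.
Local Open Scope classical_set_scope.
Lemma sset_cons (T : eqType) (x : T) s : sset (x :: s) = x |` sset s.
Proof. apply/seteqP; split=> y /=; rewrite /sset /= in_cons.
- by case/orP=> [/eqP->|]; [left|right].
- by case=> [->|->]; rewrite ?eqxx ?orbT.
Qed.
Lemma sset_nil (T : eqType) : sset (@nil T) = set0.
Proof. by apply/seteqP; split=> y. Qed.

Lemma ext_max (T : eqType) (E : set T) (indep : set T -> Prop) :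
  finitary_matroid E indep -> forall ys I, uniq I -> indep (sset I) ->
  exists J, [/\ uniq J, indep (sset J), {subset I <= J}, {subset J <= I ++ ys} &
    forall y, y \in ys -> y \in J \/ ~ indep (y |` sset J)].
Proof.
case=> Hsub H0 Hdown Haug Hfin.
elim=> [|y ys IH] I uI iI.
  by exists I; split=> // z; rewrite cats0.
case: (classic (y \notin I /\ indep (y |` sset I))) => [[nyI iyI]|nc].
  have [||J [uJ iJ sIJ sJ mJ]] := IH (y :: I); first by rewrite /= nyI uI.
    by rewrite sset_cons.
  exists J; split=> //.
  - by move=> z zI; apply: sIJ; rewrite inE zI orbT.
  - by move=> z /sJ; rewrite !mem_cat !inE; case/orP=> [/orP[->|->]|->]; rewrite ?orbT.
  move=> z; rewrite inE; case/orP=> [/eqP->|zy]; first by left; apply: sIJ; rewrite inE eqxx.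
  exact: mJ.
have [J [uJ iJ sIJ sJ mJ]] := IH I uI iI.
exists J; split=> //.
  by move=> z /sJ; rewrite !mem_cat !inE; case/orP=> ->; rewrite ?orbT.
move=> z; rewrite inE; case/orP=> [/eqP->|zy]; last exact: mJ.
case: (boolP (y \in I)) => yI; first by left; apply: sIJ.
right=> iyJ; apply: nc; split=> //; apply: (Hdown _ _ iyJ).
by move=> w [->|wI]; [left|right; apply: sIJ].
Qed.

Lemma max_size (T : eqType) (E : set T) (indep : set T -> Prop) (ys I K : seq T) :
  finitary_matroid E indep -> uniq I -> indep (sset I) ->
  (forall y, y \in ys -> y \in I \/ ~ indep (y |` sset I)) ->
  uniq K -> indep (sset K) -> {subset K <= ys} -> size K <= size I.
Proof.
case=> Hsub H0 Hdown Haug Hfin uI iI mI uK iK sK.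
rewrite leqNgt; apply/negP=> lt.
have [y yK [nyI iy]] := Haug I K uI uK iI iK lt.
by case: (mI y (sK y yK)) => [yI|]; [rewrite yI in nyI|].
Qed.

Lemma circ_dep (T : eqType) (E : set T) (indep : set T -> Prop) (ys : seq T) (x : T) (Z : set T) (I : seq T) :
  finitary_matroid E indep -> x \notin ys -> is_circuit E indep Z -> Z x ->
  Z `<=` x |` sset ys -> uniq I -> indep (sset I) -> {subset I <= ys} ->
  (forall y, y \in ys -> y \in I \/ ~ indep (y |` sset I)) ->
  ~ indep (x |` sset I).
Proof.
move=> Hm nx [ZE nZ mZ] Zx sZ uI iI sI mI ixI.
have Hm' := Hm; case: Hm' => Hsub H0 Hdown Haug Hfin.
pose zs := undup (filter (fun y => `[< Z y >]) ys).
have izs : indep (sset zs).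
  apply: mZ.
    by move=> y; rewrite /sset /= mem_undup mem_filter => /andP[/asboolP].
  move=> e; have : sset zs x by rewrite e.
  by rewrite /sset /= mem_undup mem_filter (negbTE nx) andbF.
have [K [uK iK szK sK mK]] := @ext_max T E indep Hm ys zs (undup_uniq _) izs.
have sKys : {subset K <= ys}.
  move=> y /sK; rewrite mem_cat mem_undup mem_filter; case/orP=> [/andP[]|] //.
have dK : ~ indep (x |` sset K).
  move=> ixK; apply: nZ; apply: (Hdown _ _ ixK) => y Zy.
  case: (sZ y Zy) => [->|yy]; [by left|right].
  by apply: szK; rewrite mem_undup mem_filter yy andbT; apply/asboolP.
have sz := @max_size T E indep ys I K Hm uI iI mI uK iK sKys.
have uxI : uniq (x :: I).
  by rewrite /= uI andbT; apply/negP=> /sI; apply/negP.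
have [||y yxI [nyK iy]] := Haug K (x :: I) uK uxI iK.
- by rewrite sset_cons.
- by rewrite /= ltnS sz.
move: yxI; rewrite inE; case/orP=> [/eqP yx|yI]; first by apply: dK; rewrite -yx.
by case: (mK y (sI y yI)) => [yK|]; [rewrite yK in nyK|].
Qed.

Lemma dep_circuit (T : eqType) (E : set T) (indep : set T -> Prop) :
  finitary_matroid E indep -> forall n (s : seq T), size s <= n -> sset s `<=` E ->
  ~ indep (sset s) -> exists C, is_circuit E indep C /\ C `<=` sset s.
Proof.
case=> Hsub H0 Hdown Haug Hfin.
elim=> [|n IH] s.
  by case: s => // _ _; rewrite sset_nil.
move=> ss sE ns.
case: (classic (forall D, D `<=` sset s -> D <> sset s -> indep D)) => [all|nall].
  by exists (sset s); split.
have [D [sD [nD iD]]] : exists D, D `<=` sset s /\ D <> sset s /\ ~ indep D.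
  apply: NNPP => h; apply: nall => D sD nD; apply: NNPP => iD; apply: h; eauto.
pose s' := filter (fun y => `[< D y >]) s.
have eD : sset s' = D.
  apply/seteqP; split=> y; rewrite /sset /= mem_filter.
    by case/andP=> /asboolP.
  by move=> Dy; rewrite (sD y Dy) andbT; apply/asboolP.
have [y ys nDy] : exists2 y, y \in s & ~ D y.
  apply: NNPP => h; apply: nD; apply/seteqP; split=> // y ys.
  by apply: NNPP => nDy; apply: h; exists y.
have lt : size s' < size s.
  rewrite size_filter -(count_predC (fun y => `[< D y >]) s).
  rewrite -{1}(addn0 (count _ s)) ltn_add2l -has_count.
  apply/hasP; exists y => //=; apply/negP => /asboolP.
  done.
have [|||C [cC sC]] := IH s'.
- by rewrite -ltnS (leq_trans lt ss).
- by rewrite eD => z /sD /sE.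
- by rewrite eD.
by exists C; split=> // z /sC; rewrite eD => /sD.
Qed.

Lemma circuit_fin (T : eqType) (E : set T) (indep : set T -> Prop) C :
  finitary_matroid E indep -> is_circuit E indep C -> exists s, C = sset s.
Proof.
case=> Hsub H0 Hdown Haug Hfin [CE nC mC].
have [s [sC ns]] : exists s, sset s `<=` C /\ ~ indep (sset s).
  apply: NNPP => h; apply: nC; apply: Hfin => s sC; apply: NNPP => ns; apply: h; eauto.
exists s; apply: NNPP => ne; apply: ns; apply: mC => //.
by move=> e; apply: ne.
Qed.

Lemma union_fin (T : eqType) (Cf : nat -> set T) n :
  (forall i, i <= n -> exists s, Cf i = sset s) ->
  exists s : seq T, forall y, y \in s <-> exists2 i, i <= n & Cf i y.
Proof.
elim: n => [|n IH] H.
  have [s es] := H 0 (leqnn 0); exists s => y; split.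
    by move=> ys; exists 0 => //; rewrite es.
  by case=> i; rewrite leqn0 => /eqP ->; rewrite es.
have [s es] := IH (fun i ii => H i (leqW ii)).
have [t et] := H n.+1 (leqnn _).
exists (s ++ t) => y; rewrite mem_cat; split.
  case/orP=> [/es [i ii Ci]|yt]; first by exists i => //; apply: leqW.
  by exists n.+1 => //; rewrite et.
case=> i; rewrite leq_eqVlt; case/orP=> [/eqP ->|ii] Ci.
  by rewrite et in Ci; rewrite Ci orbT.
by apply/orP; left; apply/es; exists i.
Qed.

Lemma fund_in (T : eqType) (E : set T) (indep : set T -> Prop) B e C :
  finitary_matroid E indep -> indep B -> ~ B e -> is_fund_circuit E indep B e C -> C e.
Proof.
case=> Hsub H0 Hdown Haug Hfin iB nBe [[CE nC mC] sC].
apply: NNPP => nCe; apply: nC; apply: (Hdown _ _ iB) => y Cy.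
by case: (sC y Cy) => // ye; rewrite ye in Cy.
Qed.

Lemma mainM (T : eqType) (E : set T) (indep : set T -> Prop)
  (B : set T) (n : nat) (e : nat -> T) (Cf : nat -> set T) (F : set T) :
  finitary_matroid E indep -> indep B ->
  (forall i, i <= n -> E (e i) /\ ~ B (e i)) ->
  (forall i, i <= n -> is_fund_circuit E indep B (e i) (Cf i)) ->
  F `<=` B ->
  (forall f, F f -> exists Z, [/\ is_circuit E indep Z, Z f &
     Z `<=` f |` [set y | (exists2 i, i <= n & Cf i y) /\ ~ F y /\ y <> e 0]]) ->
  exists C : set T, [/\ is_circuit E indep C, C (e 0) &
      C `<=` [set x | exists2 i, 0 <= i <= n & Cf i x] `\` F].
Proof.
move=> Hm iB He HC HFB H.
have Hm' := Hm; case: Hm' => Hsub H0 Hdown Haug Hfin.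
have [s es] : exists s : seq T, forall y, y \in s <-> exists2 i, i <= n & Cf i y.
  apply: union_fin => i ii; have [cC _] := HC i ii.
  have [t et] := @circuit_fin T E indep (Cf i) Hm cC; by exists t.
pose xs := filter (fun y => `[< ~ F y /\ y <> e 0 >]) s.
pose fs := filter (fun y => `[< F y >]) s.
have exs : forall y, y \in xs <-> (exists2 i, i <= n & Cf i y) /\ ~ F y /\ y <> e 0.
  move=> y; rewrite mem_filter; split.
    by case/andP=> /asboolP [nF ne] /es.
  by case=> /es -> h; rewrite andbT; apply/asboolP.
have [|I [uI iI _ sI mI]] := @ext_max T E indep Hm xs [::] isT.
  by rewrite sset_nil.
have sI' : {subset I <= xs} by move=> y /sI.
have mI2 : forall y, y \in xs ++ fs -> y \in I \/ ~ indep (y |` sset I).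
  move=> y; rewrite mem_cat; case/orP=> [|yf]; first exact: mI.
  right; move: yf; rewrite mem_filter => /andP[/asboolP Fy _].
  have [Z [cZ Zy sZ]] := H y Fy.
  apply: (@circ_dep T E indep xs y Z I Hm) => //.
    by apply/negP => /exs [_ []].
  by move=> z /sZ [->|/exs zx]; [left|right].
have e0E := He 0 (leq0n n).
have Ce0 : Cf 0 (e 0) by apply: (@fund_in T E indep B (e 0) (Cf 0) Hm iB e0E.2 (HC 0 (leq0n n))).
have nd : ~ indep (e 0 |` sset I).
  apply: (@circ_dep T E indep (xs ++ fs) (e 0) (Cf 0) I Hm) => //.
  - rewrite mem_cat; apply/negP; case/orP=> [/exs [_ []]//|].
    by rewrite mem_filter => /andP[/asboolP /HFB ? _]; case: e0E.
  - by case: (HC 0 (leq0n n)).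
  - move=> y Cy; case: (classic (y = e 0)) => [->|ne]; [by left|right].
    have ys : y \in s by apply/es; exists 0.
    rewrite /sset /= mem_cat; case: (classic (F y)) => Fy.
      by apply/orP; right; rewrite /fs mem_filter ys andbT; apply/asboolP.
    by apply/orP; left; apply/exs; split=> //; exists 0.
  - by move=> y yI; rewrite mem_cat sI' .
have [||C [cC sC]] := @dep_circuit T E indep Hm (size (e 0 :: I)) (e 0 :: I) (leqnn _).
- rewrite sset_cons => y [->|yI]; first by case: e0E.
  exact: (Hsub _ iI).
- by rewrite sset_cons.
exists C; split=> //.
  apply: NNPP => nC; case: cC => _ nCi _; apply: nCi; apply: (Hdown _ _ iI) => y Cy.
  by move: (sC y Cy); rewrite sset_cons; case=> // ye; rewrite ye in Cy.
move=> y /sC; rewrite sset_cons; case=> [->|yI].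
  by split; [exists 0|move=> /HFB; case: e0E].
have /exs [[i ii Ci] [nF _]] := sI' y yI.
by split=> //; exists i.
Qed.

Theorem lemma3p3 (T : eqType) (E : set T) (indep : set T -> Prop)
  (B : set T) (n : nat) (e : nat -> T) (Cf : nat -> set T) (F : set T) :
  finitary_matroid E indep ->
  is_base indep B ->
  (forall i, i <= n -> E (e i) /\ ~ B (e i)) ->
  (forall i j, i <= n -> j <= n -> i <> j -> e i <> e j) ->
  (forall i, i <= n -> is_fund_circuit E indep B (e i) (Cf i)) ->
  F `<=` B ->
  (exists f : nat -> T, F `<=` f @` [set k | k < n]) ->
  exists2 istar, istar <= n &
    exists C : set T, [/\ is_circuit E indep C, C (e istar) &
      C `<=` [set x | exists2 i, istar <= i <= n & Cf i x] `\` F].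
Proof.
elim: n e Cf F => [|n IH] e Cf F Hm HBb He Hd HC HFB [g Hg];
  have iB := HBb.1.
  exists 0 => //; apply: (@mainM T E indep B) => // f /Hg [k] //.
case: (classic (exists2 istar, istar <= n.+1 &
    exists C : set T, [/\ is_circuit E indep C, C (e istar) &
      C `<=` [set x | exists2 i, istar <= i <= n.+1 & Cf i x] `\` F])) => // ng.
exists 0 => //; apply: (@mainM T E indep B) => // f Ff.
have [j jlt gj] := Hg f Ff.
pose g' k := if k < j then g k else g k.+1.
have [|||||istar ist [C [cC Ce Csub]]] :=
  IH (fun i => e i.+1) (fun i => Cf i.+1) (F `\` [set f]) Hm HBb.
- by move=> i ii; apply: He.
- by move=> i k ii kk ik; apply: Hd => // -[].
- by move=> i ii; apply: HC.
- by move=> y [/HFB].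
- exists g' => y [Fy nyf]; have [k klt gk] := Hg y Fy.
  have kj : k != j by apply/eqP => kj; apply: nyf; rewrite -gk kj gj.
  case: (ltngtP k j) => [kj'|jk|/eqP]; last by rewrite (negbTE kj).
    exists k; last by rewrite /g' kj'.
    by move: jlt => /= jlt; apply: (leq_trans kj'); rewrite -ltnS.
  case: k jk klt gk {kj} => // k jk klt gk.
  exists k; first by rewrite /= -ltnS.
  by rewrite /g' ltnNge -ltnS jk.
case: (classic (C f)) => Cfp.
  exists C; split=> // y Cy; case: (classic (y = f)) => [->|ne]; [by left|right].
  have [[i /andP[_ ii] Ci] nF] := Csub y Cy.
  have nFy : ~ F y by move=> Fy; apply: nF.
  rewrite /=; split; first by exists i.+1; rewrite ?ltnS.
  split=> // ye; have [_ sC] := HC i.+1 ii.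
  case: (sC y Ci) => [yi|By].
    by apply: (Hd i.+1 0) => //; rewrite -yi.
  by case: (He 0 (leq0n _)); rewrite -ye.
exfalso; apply: ng; exists istar.+1 => //; exists C; split=> // y Cy.
have [[i ii Ci] nF] := Csub y Cy.
split; first by exists i.+1; rewrite /= ?ltnS.
by move=> Fy; apply: nF; split=> // yf; apply: Cfp; rewrite -yf.
Qed.
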